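(* Let $\Gamma$ be a group, $M$ a $\Gamma$-module, and $\Delta$ the subgroup of $\Gamma$ consisting of the elements acting trivially on $M$. Then the inflation map $H^1(\Gamma/\Delta,M)\to H^1(\Gamma,M)$ restricts to an isomorphism $H^1_{\rm loc}(\Gamma/\Delta,M)\cong H^1_{\rm loc}(\Gamma,M)$.
   Context: For a group $\Gamma$ and a $\Gamma$-module $M$, $H^1_{\rm loc}(\Gamma,M)$ is the subgroup of $H^1(\Gamma,M)$ consisting of the classes $[Z]$ of cocycles $Z$ such that for every $\gamma\in\Gamma$ there exists $m_\gamma\in M$ with $Z_\gamma=\gamma m_\gamma-m_\gamma$. *)

(* Defs.v *)
From HB Require Import structures.
From mathcomp Require Import all_boot all_order all_algebra monoid.
Set Implicit Arguments. Unset Strict Implicit. Unset Printing Implicit Defensive.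
Import GRing.Theory.

Section Cohomology.
Variables (G : groupType) (M : zmodType).

Definition is_module (act : G -> M -> M) : Prop :=
  [/\ (forall m, act 1%g m = m),
      (forall g h m, act (g * h)%g m = act g (act h m)),
      (forall g, act g 0%R = 0%R) &
      (forall g m n, act g (m + n)%R = (act g m + act g n)%R)].

Definition cocycle (act : G -> M -> M) (Z : G -> M) : Prop :=
  forall g h, Z (g * h)%g = (Z g + act g (Z h))%R.

Definition coboundary (act : G -> M -> M) (Z : G -> M) : Prop :=
  exists m : M, forall g, Z g = (act g m - m)%R.

Definition cohomologous (act : G -> M -> M) (Z Z' : G -> M) : Prop :=
  coboundary act (fun g => Z g - Z' g)%R.

(* cocycles whose class lies in H^1_loc *)
Definition loc_cocycle (act : G -> M -> M) (Z : G -> M) : Prop :=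
  cocycle act Z /\ forall g, exists m : M, Z g = (act g m - m)%R.

Definition trivially_acting (act : G -> M -> M) (g : G) : Prop :=
  forall m, act g m = m.

End Cohomology.

(* pi : G -> Q presents Q as the quotient group G / D, D given as a predicate *)
Definition is_quotient_map (G Q : groupType) (D : G -> Prop) (pi : G -> Q) : Prop :=
  [/\ (forall x y, pi (x * y)%g = (pi x * pi y)%g),
      (forall q, exists x, pi x = q) &
      (forall x, pi x = 1%g <-> D x)].

Definition inflation (G Q : groupType) (M : Type) (pi : G -> Q) (Z : Q -> M) : G -> M :=
  fun g => Z (pi g).

(* Main.v *)
Require Import Defs.
From HB Require Import structures.
From mathcomp Require Import all_boot all_order all_algebra monoid.
From Stdlib Require Import ClassicalEpsilon.
Import GRing.Theory.

Theorem lemma13 (G Q : groupType) (M : zmodType)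
    (act : G -> M -> M) (actQ : Q -> M -> M) (pi : G -> Q)
    (Hmod : is_module act)
    (Hpi : is_quotient_map (trivially_acting act) pi)
    (HactQ : forall g m, actQ (pi g) m = act g m) :
  (forall Z, loc_cocycle actQ Z -> loc_cocycle act (inflation pi Z)) /\
  (forall Z1 Z2, loc_cocycle actQ Z1 -> loc_cocycle actQ Z2 ->
     cohomologous actQ Z1 Z2 ->
     cohomologous act (inflation pi Z1) (inflation pi Z2)) /\
  (forall Z1 Z2, loc_cocycle actQ Z1 -> loc_cocycle actQ Z2 ->
     cohomologous act (inflation pi Z1) (inflation pi Z2) ->
     cohomologous actQ Z1 Z2) /\
  (forall W, loc_cocycle act W ->
     exists Z, loc_cocycle actQ Z /\ cohomologous act (inflation pi Z) W).
Proof.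
case: Hmod => act1 actM act0 actD.
case: Hpi => piM piS piK.
split.
  move=> Z [cZ lZ]; split.
    by move=> g h; rewrite /inflation piM cZ HactQ.
  by move=> g; have [m Hm] := lZ (pi g); exists m; rewrite /inflation Hm HactQ.
split.
  move=> Z1 Z2 _ _ [m Hm]; exists m => g.
  by rewrite /inflation Hm HactQ.
split.
  move=> Z1 Z2 _ _ [m Hm]; exists m => q.
  have [g <-] := piS q.
  by rewrite HactQ -Hm.
move=> W [cW lW].
have Wconst : forall x y, pi x = pi y -> W x = W y.
  move=> x y Hxy.
  have Hd : pi (x^-1 * y)%g = 1%g.
    apply: (@mulgI _ (pi x)).
    by rewrite -piM mulVKg mulg1.
  have /piK Dd := Hd.
  have Wd : W (x^-1 * y)%g = 0%R.
    have [m Hm] := lW (x^-1 * y)%g.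
    by rewrite Hm Dd subrr.
  have -> : y = (x * (x^-1 * y))%g by rewrite mulVKg.
  by rewrite cW Wd act0 addr0.
pose s q := proj1_sig (constructive_indefinite_description _ (piS q)).
have sP : forall q, pi (s q) = q.
  by move=> q; rewrite /s; case: constructive_indefinite_description.
exists (fun q => W (s q)).
have ZW : forall g, W (s (pi g)) = W g by move=> g; apply: Wconst; rewrite sP.
split; first split.
- move=> q1 q2.
  rewrite -{1}(sP q1) -{1}(sP q2) -piM ZW cW.
  by rewrite -(sP q1) HactQ sP.
- move=> q; have [m Hm] := lW (s q); exists m.
  by rewrite Hm -HactQ sP.
- exists 0%R => g; rewrite /inflation ZW act0 !subrr //.
Qed.
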